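(* Consider the dissemination stage described in the context on a connected non-bipartite graph, with $N$ large enough that $g(N)>\ln N$. If each agent sets off $hg(N)$ MHRW tokens, then with probability at least $1-\frac{1}{N^{h/3}}$ all these walks complete their $L$ steps, and hence reach the $\frac1{N^3}$-nearly uniform distribution $[\frac1N-\frac1{N^3},\frac1N+\frac1{N^3}]$ over agents, within $O(\log^2N)$ slots.
   Context: $\mathcal G=(\mathcal N,\mathcal E)$ is a connected, non-bipartite undirected graph on agents $\mathcal N=\{1,\dots,N\}$; $\mathcal N_i$ is the neighbor set of $i$, $N_i=|\mathcal N_i|$. The function $g:\mathbb N^+\to\mathbb R$ satisfies: for every real $\ell>0$, $g(N)>\ell\ln N$ and $g(N)<\ell N$ for all sufficiently large $N$. Let $\beta\in(1/2,1)$, $\sigma\ge11$, $h=16\sigma/(1-\beta)$. Metropolis–Hastings random walk (MHRW): from $i$ move to $i'\in\mathcal N_i$ with probability $\Psi(i,i')=\min\{1/N_i,1/N_{i'}\}$ and stay at $i$ with probability $1-\sum_{k\in\mathcal N_i}\Psi(i,k)$. The walk length $L=O(\log N)$ is chosen so that from any start the position after $L$ steps is at each agent with probability in $[\frac1N-\frac1{N^3},\frac1N+\frac1{N^3}]$. Time is slotted and synchronous. Dissemination: each agent launches $hg(N)$ independent tokens, each to be forwarded $L$ times; each agent stores received tokens with positive remaining length in a FIFO queue and in every slot pops up to $hg(N)$ of them, decrements their remaining length, and forwards each to a node chosen according to $\Psi(i,\cdot)$. *)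

(* Defs.v *)
From HB Require Import structures.
From mathcomp Require Import all_boot all_order all_algebra.
From mathcomp Require Import all_classical all_reals all_analysis.
Set Implicit Arguments. Unset Strict Implicit. Unset Printing Implicit Defensive.
Import Order.TTheory GRing.Theory Num.Theory.
Local Open Scope ring_scope.

Section Graph.
Variables (T : finType) (e : rel T).

Definition simple_graph := symmetric e /\ irreflexive e.
Definition graph_connected := forall x y : T, connect e x y.
Definition non_bipartite := ~ exists c : T -> bool, forall x y, e x y -> c x != c y.

Definition nbrs (i : T) : {set T} := [set j | e i j].
Definition deg (i : T) : nat := #|nbrs i|.

Variable R : realType.

Definition Psi (i j : T) : R :=
  if e i j then Num.min (deg i)%:R^-1 (deg j)%:R^-1
  else if i == j then 1 - \sum_(k in nbrs i) Num.min (deg i)%:R^-1 (deg k)%:R^-1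
  else 0.

Fixpoint walkprob (n : nat) (i j : T) : R :=
  if n is n'.+1 then \sum_k Psi i k * walkprob n' k j else (i == j)%:R.

Variables (L M : nat).
(* a token = (owner agent, index among the M tokens launched by the owner) *)
Definition token := (T * 'I_M)%type.
(* a configuration of the randomness: for each token, the sequence of the
   L nodes visited by its MHRW (positions after hops 1..L) *)
Definition config := {ffun token -> L.-tuple T}.

Definition pos (w : config) (t : token) (k : nat) : T :=
  if k is k'.+1 then nth t.1 (w t) k' else t.1.

Definition weight (w : config) : R :=
  \prod_(t : token) \prod_(k < L) Psi (pos w t k) (pos w t k.+1).

Definition Pr (E : pred config) : R := \sum_(w | E w) weight w.

Record state := State { queue : {ffun T -> seq token}; hops : {ffun token -> nat} }.

Definition init_state : state :=
  State [ffun i => [seq (i, m) | m <- enum 'I_M]] [ffun => 0%N].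

(* one synchronous slot: every agent pops up to M tokens from the front of its
   queue, each popped token makes one hop (to the next node of its walk);
   tokens with positive remaining length are appended to the receiver's queue
   (simultaneous arrivals appended in the order of the senders' enumeration,
   then FIFO order at the sender). *)
Definition step (w : config) (s : state) : state :=
  let popped i := take M (queue s i) in
  let moved t := has (fun i => t \in popped i) (enum T) in
  let nh t := if moved t then (hops s t).+1 else hops s t in
  State
    [ffun j => drop M (queue s j) ++
       flatten [seq [seq t <- popped i | (pos w t (nh t) == j) && (nh t < L)%N]
               | i <- enum T]]
    [ffun t => nh t].

Definition all_done (s : state) : bool := [forall t : token, hops s t == L].

End Graph.

(* Main.v *)
Require Import Defs.
From HB Require Import structures.
From mathcomp Require Import all_boot all_order all_algebra.
From mathcomp Require Import all_classical all_reals all_analysis.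
From mathcomp Require Import zify ring lra.
Import Order.TTheory GRing.Theory Num.Theory.
Set Implicit Arguments. Unset Strict Implicit.

Section D.
Variables (T : finType) (L M : nat) (w : config T L M).
Hypothesis L0 : (0 < L)%N.

Definition Inv (s : state T M) :=
  (forall t, hops s t <= L) /\
  (forall t j, count_mem t (queue s j) = ((hops s t < L) && (pos w t (hops s t) == j)) :> nat).

Lemma Inv_init : Inv (init_state T M).
Proof.
split=> [t|t j]; rewrite /init_state /= ffunE //.
rewrite ffunE L0 /= count_map.
case: t => i m /=.
case: (eqVneq i j) => [->|ij].
  rewrite (eq_count (a2 := pred1 m)); last by move=> m' /=; rewrite xpair_eqE eqxx.
  by rewrite count_uniq_mem ?enum_uniq // mem_enum.
rewrite (eq_count (a2 := pred0)) ?count_pred0 // => m' /=.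
by rewrite xpair_eqE [j == i]eq_sym (negbTE ij).
Qed.

Lemma hops_step s t : hops (step w s) t =
  if has (fun i => t \in take M (queue s i)) (enum T) then (hops s t).+1 else hops s t.
Proof. by rewrite /step /= ffunE. Qed.

Lemma queue_step s j : queue (step w s) j = drop M (queue s j) ++
  flatten [seq [seq t <- take M (queue s i) |
     (pos w t (hops (step w s) t) == j) && (hops (step w s) t < L)] | i <- enum T].
Proof.
rewrite /step /= ffunE; congr (_ ++ flatten _); apply: eq_map => i.
by apply: eq_filter => t; rewrite ffunE.
Qed.

Lemma count_take_drop (t : token T M) (q : seq (token T M)) :
  count_mem t (take M q) + count_mem t (drop M q) = count_mem t q.
Proof. by rewrite -count_cat cat_take_drop. Qed.

Lemma ct_one (t : token T M) (q : seq (token T M)) : count_mem t q = 1%N -> (0 < count_mem t (take M q))%N ->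
  count_mem t (take M q) = 1%N.
Proof. have := count_take_drop t q; lia. Qed.

Lemma cnt_gt0 (t : token T M) l : (0 < count_mem t l)%N = (t \in l).
Proof. by rewrite -has_count has_pred1. Qed.

Lemma count_predI1 (t : token T M) (P : pred (token T M)) l :
  count (predI (pred1 t) P) l = if P t then count_mem t l else 0%N.
Proof.
case: ifP => Pt.
  by apply: eq_count => t' /=; case: eqP => // ->; rewrite Pt.
by rewrite (eq_count (a2 := pred0)) ?count_pred0 // => t' /=; case: eqP => // ->; rewrite Pt.
Qed.

Lemma key_lemma s (Hc : forall t j, count_mem t (queue s j) = ((hops s t < L) && (pos w t (hops s t) == j)) :> nat) t : let h := hops s t in let j0 := pos w t h in
[/\ (has (fun i => t \in take M (queue s i)) (enum T) = (0 < count_mem t (take M (queue s j0)))%N),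
    forall i, i != j0 -> count_mem t (take M (queue s i)) = 0%N &
    (0 < count_mem t (take M (queue s j0)) -> h < L)%N].
Proof.
move=> h j0.
have ct_le i : (count_mem t (take M (queue s i)) <= (h < L) && (j0 == i))%N.
  by rewrite -Hc -count_take_drop leq_addr.
split.
- apply/hasP/idP => [[i _ hi]|hpos].
    have := ct_le i; have : (0 < count_mem t (take M (queue s i)))%N by rewrite cnt_gt0.
    by case: (eqVneq j0 i) => [->|]; rewrite ?andbF //; lia.
  by exists j0; rewrite ?mem_enum // -cnt_gt0.
- move=> i ij; have := ct_le i; rewrite eq_sym (negbTE ij) andbF; lia.
- move=> hp; move: (ct_le j0); rewrite eqxx andbT; case: (h < L)%N => //; rewrite leqn0 => /eqP e; by rewrite e in hp.
Qed.

Lemma Inv_step s : Inv s -> Inv (step w s).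
Proof.
move=> [Hh Hc].
have key := key_lemma Hc.
split=> [t|t j].
  rewrite hops_step; have [hm _ hl] := key t; rewrite hm.
  by case: ifP => // /hl.
rewrite queue_step count_cat count_flatten sumnE big_map big_map big_enum.
under eq_bigr do rewrite count_filter.
have [hm h0 hl] := key t.
set h := hops s t in hm h0 hl *; set j0 := pos w t h in hm h0 hl *.
rewrite (bigD1 j0) //= [X in (_ + (_ + X))%N]big1 ?addn0; last first.
  move=> i ij; apply/eqP; rewrite -leqn0 -(h0 i ij).
  by apply: sub_count => t' /= /andP[].
rewrite count_predI1.
have ct_dd := count_take_drop t (queue s j).
have ct_j0 := count_take_drop t (queue s j0).
rewrite !Hc -/h -/j0 in ct_dd ct_j0.
rewrite hops_step hm -/h.
set a := count_mem t (take M (queue s j0)) in ct_j0 hl hm *.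
set b := count_mem t (drop M (queue s j0)) in ct_j0 *.
set a' := count_mem t (take M (queue s j)) in ct_dd *.
set b' := count_mem t (drop M (queue s j)) in ct_dd *.
case: (ltnP 0 a) => hpos /=.
  have hL := hl hpos; rewrite hL eqxx /= in ct_j0.
  have c1 : a = 1%N by lia.
  rewrite c1.
  have hb' : b' = 0%N.
    case: (eqVneq j0 j) => [ej|nj].
      by move: ct_dd; rewrite /a' /b' -ej -/a c1 hL eqxx /=; lia.
    by move: ct_dd; rewrite hL (negbTE nj) /=; lia.
  by rewrite hb' add0n andbC; case: (_ && _).
have c0 : a = 0%N by lia.
rewrite c0 if_same addn0.
case: (eqVneq j0 j) => [ej|nj].
  subst j; move: ct_dd; rewrite /a' -/a c0 add0n. by rewrite eqxx.
have ha' : a' = 0%N by apply: h0; rewrite eq_sym; exact: nj.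
by move: ct_dd; rewrite (negbTE nj) andbF ha' add0n.
Qed.

Hypothesis M0 : (0 < M)%N.

Definition st n := iter n (step w) (init_state T M).

Lemma Inv_st n : Inv (st n).
Proof. elim: n => [|n IH]; [exact: Inv_init | exact: Inv_step]. Qed.

Lemma hops_mono s t : (hops s t <= hops (step w s) t)%N.
Proof. by rewrite hops_step; case: ifP. Qed.

Definition long (j : T) (s : state T M) : nat := (M <= size (queue s j))%N.

Definition Phi (j : T) (s : state T M) : nat :=
  (\sum_(t : token T M) \sum_(k < L) ((pos w t k == j) && (hops s t <= k)))%N.

Lemma sum_count (l : seq (token T M)) : (\sum_t count_mem t l)%N = size l.
Proof.
elim: l => [|x l IH] /=; first by rewrite big1.
rewrite big_split /= IH (bigD1 x) //= eqxx big1 // => t /negbTE.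
by rewrite eq_sym => ->.
Qed.

Lemma Phi_step s j : Inv s -> (Phi j (step w s) + M * long j s <= Phi j s)%N.
Proof.
move=> [Hh Hc].
apply: leq_trans (_ : Phi j (step w s) + \sum_t count_mem t (take M (queue s j)) <= _)%N.
  rewrite leq_add2l sum_count size_take /long.
  by case: ltnP => hM; case: leqP => //= hM'; lia.
rewrite /Phi -big_split /=; apply: leq_sum => t _.
have [hm h0 hl] := key_lemma Hc t.
set h := hops s t in hm h0 hl *; set j0 := pos w t h in hm h0 hl *.
have hmon := hops_mono s t.
have mono : (\sum_(k < L) ((pos w t k == j) && (hops (step w s) t <= k)) <=
             \sum_(k < L) ((pos w t k == j) && (h <= k)))%N.
  apply: leq_sum => k _; case: (pos w t k == j) => //=.
  by case: (boolP (hops (step w s) t <= k)%N) => // hk; rewrite (leq_trans hmon hk).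
case: (eqVneq j0 j) => [ej|nj]; last first.
  rewrite (h0 j); last by rewrite eq_sym.
  by rewrite addn0.
rewrite -ej.
case: (ltnP 0 (count_mem t (take M (queue s j0)))) => hpos; last first.
  by move: hpos; rewrite leqn0 => /eqP ->; rewrite addn0 ej.
have hL := hl hpos.
have c1 : count_mem t (take M (queue s j0)) = 1%N.
  apply: ct_one hpos; by rewrite Hc -/h -/j0 hL eqxx.
rewrite c1.
have h' : hops (step w s) t = h.+1 by rewrite hops_step hm hpos.
rewrite h' (bigD1 (Ordinal hL)) //= [X in (_ <= X)%N](bigD1 (Ordinal hL)) //= -/j0 eqxx ltnn leqnn /=.
rewrite add0n addnC add1n ltnS ej.
apply: leq_sum => k _; case: (pos w t k == j) => //=.
by case: (boolP (h < k)%N) => // hk; rewrite (ltnW hk).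
Qed.

Lemma long_sum j n : (M * \sum_(m < n) long j (st m) + Phi j (st n) <= Phi j (st 0))%N.
Proof.
elim: n => [|n IH]; first by rewrite big_ord0 muln0.
rewrite big_ord_recr /= mulnDr -addnA.
apply: leq_trans IH; rewrite leq_add2l addnC.
exact: (Phi_step j (Inv_st n)).
Qed.

Lemma long_bound j n :
  (\sum_(t : token T M) \sum_(k < L) (pos w t k == j) <= 4 * M * L)%N ->
  (\sum_(m < n) long j (st m) <= 4 * L)%N.
Proof.
move=> hV.
have h1 : (Phi j (st 0) <= 4 * M * L)%N.
  apply: leq_trans hV; apply: leq_sum => t _; apply: leq_sum => k _.
  by case: (pos w t k == j) => //=; apply: leq_b1.
have := long_sum j n.
move=> h2; have h3 : (M * \sum_(m < n) long j (st m) <= M * (4 * L))%N by lia.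
by rewrite leq_pmul2l in h3.
Qed.

Lemma token_bound t n : (hops (st n) t < L)%N ->
  (n <= hops (st n) t + \sum_(k < L) \sum_(m < n) long (pos w t k) (st m))%N.
Proof.
elim: n => [|n IH] hn; first by [].
have hmon := hops_mono (st n) t.
have IH' := IH (leq_ltn_trans hmon hn).
have [_ Hc] := Inv_st n.
have [hm h0 hl] := key_lemma Hc t.
set s := st n in hm h0 hl Hc hmon IH' *.
set h := hops s t in hm h0 hl hmon IH' *; set j0 := pos w t h in hm h0 hl *.
have hL : (h < L)%N := leq_ltn_trans hmon hn.
under eq_bigr do rewrite big_ord_recr /=.
rewrite big_split /=.
change (st n.+1) with (step w s).
rewrite hops_step hm.
case: (ltnP 0 (count_mem t (take M (queue s j0)))) => hpos.
  by rewrite /= -/h addSn ltnS addnA; apply: leq_trans IH' (leq_addr _ _).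
have hlong : long j0 s = 1%N.
  rewrite /long; apply/eqP; rewrite eqb1 leqNgt; apply/negP => hsz.
  have hd := count_take_drop t (queue s j0).
  rewrite (drop_oversize (ltnW hsz)) addn0 in hd.
  have hc := Hc t j0; rewrite -/h -/j0 hL eqxx in hc.
  by move: hpos; rewrite leqn0 hd hc.
have : (1 <= \sum_(k < L) long (pos w t k) s)%N.
  by rewrite (bigD1 (Ordinal hL)) //= -/j0 hlong.
move=> hB; rewrite /= -/h addnA -addn1; exact: leq_add IH' hB.
Qed.

Theorem det_done n :
  (forall j, \sum_(t : token T M) \sum_(k < L) (pos w t k == j) <= 4 * M * L)%N ->
  (L * (4 * L + 1) <= n)%N -> all_done L (st n).
Proof.
move=> hV hn; apply/forallP => t.
have [Hh _] := Inv_st n.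
have := Hh t; rewrite leq_eqVlt => /orP[//|hlt].
have := token_bound hlt.
have : (\sum_(k < L) \sum_(m < n) long (pos w t k) (st m) <= L * (4 * L))%N.
  apply: leq_trans (_ : \sum_(k < L) 4 * L <= _)%N.
    by apply: leq_sum => k _; apply: long_bound.
  by rewrite sum_nat_const card_ord.
lia.
Qed.

End D.


Local Open Scope ring_scope.

Section P.
Variables (T : finType) (e : rel T) (R : realType).
Hypothesis (esym : symmetric e) (eirr : irreflexive e).

Local Notation Psi := (Psi e R).
Local Notation wp := (walkprob e R).

Lemma Psi_sym i j : Psi i j = Psi j i.
Proof.
rewrite /Psi esym eq_sym; case: (e j i) => //; first by rewrite minC.
by case: eqP => // ->.
Qed.

Lemma Psi_ge0 i j : 0 <= Psi i j.
Proof.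
rewrite /Psi; case: (e i j); first by rewrite le_min !invr_ge0 !ler0n.
case: eqP => // _; rewrite subr_ge0.
apply: le_trans (_ : \sum_(k in nbrs e i) (deg e i)%:R^-1 <= 1).
  by apply: ler_sum => k _; rewrite ge_min lexx.
rewrite sumr_const /deg; case: #|_| => [|n]; first by rewrite mulr0n.
by rewrite -[_ *+ n.+1]mulr_natl mulfV ?pnatr_eq0.
Qed.

Lemma Psi_row i : \sum_k Psi i k = 1.
Proof.
rewrite (bigID (fun k => e i k)) /=.
have -> : \sum_(k | ~~ e i k) Psi i k = Psi i i.
  rewrite (bigD1 i) ?eirr //= big1 ?addr0 // => k /andP[/negbTE ek /negbTE ik].
  by rewrite /Defs.Psi ek eq_sym ik.
have -> : \sum_(k | e i k) Psi i k =
   \sum_(k in nbrs e i) Num.min (deg e i)%:R^-1 (deg e k)%:R^-1.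
  apply: eq_big => k; first by rewrite /nbrs inE.
  by move=> ek; rewrite /Defs.Psi ek.
have -> : Psi i i = 1 - \sum_(k in nbrs e i) Num.min (deg e i)%:R^-1 (deg e k)%:R^-1.
  by rewrite /Defs.Psi eirr eqxx.
by rewrite addrC subrK.
Qed.

Lemma Psi_col j : \sum_i Psi i j = 1.
Proof. by rewrite -(Psi_row j); apply: eq_bigr => i _; rewrite Psi_sym. Qed.

Lemma wp_col k j : \sum_i wp k i j = 1.
Proof.
elim: k j => [|k IH] j /=.
  by rewrite (bigD1 j) //= eqxx big1 ?addr0 // => i /negbTE ->.
rewrite exchange_big /= -(IH j); apply: eq_bigr => m _.
by rewrite -mulr_suml Psi_col mul1r.
Qed.

Lemma wp_ge0 k i j : 0 <= wp k i j.
Proof.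
elim: k i => [|k IH] i /=; first by case: eqP.
by apply: sumr_ge0 => m _; rewrite mulr_ge0 ?Psi_ge0.
Qed.

Definition posp n (i : T) (p : n.-tuple T) (k : nat) : T :=
  if k is k'.+1 then nth i p k' else i.
Definition pw n (i : T) (p : n.-tuple T) : R :=
  \prod_(k < n) Psi (posp i p k) (posp i p k.+1).

Lemma pw_ge0 n i (p : n.-tuple T) : 0 <= pw i p.
Proof. by apply: prodr_ge0 => k _; apply: Psi_ge0. Qed.

Lemma sum_tupleS n (F : n.+1.-tuple T -> R) :
  \sum_p F p = \sum_x \sum_(q : n.-tuple T) F [tuple of x :: q].
Proof.
rewrite pair_big /=.
rewrite (reindex (fun u : T * n.-tuple T => [tuple of u.1 :: u.2])) //=.
exists (fun p : n.+1.-tuple T => (thead p, [tuple of behead p])) => /=.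
  by move=> [x q] _ /=; rewrite theadE; congr pair; apply: val_inj.
by move=> p _; rewrite [in RHS](tuple_eta p); apply: val_inj.
Qed.

Lemma pw_cons n i x (q : n.-tuple T) :
  pw i [tuple of x :: q] = Psi i x * pw x q.
Proof.
rewrite /pw big_ord_recl /=; congr (_ * _); apply: eq_bigr => k _ /=.
rewrite /posp /=; case: k => [[|k]] /= hk; rewrite ?add0n; congr Psi; apply: set_nth_default; rewrite size_tuple; lia.
Qed.

Lemma pathA n i k (f : T -> R) : (k <= n)%N ->
  \sum_(q : n.-tuple T) pw i q * f (posp i q k) = \sum_j wp k i j * f j.
Proof.
elim: n i k f => [|n IH] i k f.
  rewrite leqn0 => /eqP ->; rewrite (big_pred1 [tuple]) => [|q]; last by rewrite [q]tuple0 /= eqxx.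
  rewrite /= /pw big_ord0 mul1r.
  by rewrite (bigD1 i) //= eqxx mul1r big1 ?addr0 // => j /negbTE; rewrite eq_sym => ->; rewrite mul0r.
move=> hk; rewrite sum_tupleS.
under eq_bigr do under eq_bigr do rewrite pw_cons -mulrA.
under eq_bigr do rewrite -mulr_sumr.
case: k hk => [|k] hk.
  have H1 x : \sum_(q : n.-tuple T) pw x q * f (posp i [tuple of x :: q] 0) = f i.
    rewrite /= -mulr_suml.
    have := IH x 0%N (fun=> 1) (leq0n _); under eq_bigr do rewrite mulr1.
    move=> ->; rewrite (bigD1 x) //= eqxx mul1r big1 ?addr0 ?mul1r //.
    by move=> j /negbTE; rewrite eq_sym => ->; rewrite mul0r.
  under eq_bigr do rewrite H1.
  rewrite -mulr_suml Psi_row mul1r /=.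
  by rewrite (bigD1 i) //= eqxx mul1r big1 ?addr0 // => j /negbTE; rewrite eq_sym => ->; rewrite mul0r.
have H1 x : \sum_(q : n.-tuple T) pw x q * f (posp i [tuple of x :: q] k.+1) =
            \sum_j wp k x j * f j.
  rewrite -IH //; apply: eq_bigr => q _; congr (_ * f _).
  by case: k hk => [|k] hk //=; rewrite (set_nth_default x i) // size_tuple.
under eq_bigr do rewrite H1.
rewrite /=; under eq_bigr do rewrite mulr_sumr.
rewrite exchange_big /=; apply: eq_bigr => j _.
by rewrite mulr_suml; apply: eq_bigr => x _; rewrite mulrA.
Qed.

Lemma pw_sum n i : \sum_(q : n.-tuple T) pw i q = 1.
Proof.
have := @pathA n i 0 (fun=> 1) (leq0n _).
under eq_bigr do rewrite mulr1. move=> ->.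
by rewrite (bigD1 i) //= eqxx mul1r big1 ?addr0 // => j /negbTE; rewrite eq_sym => ->; rewrite mul0r.
Qed.

Lemma pw_marg n i k j : (k <= n)%N ->
  \sum_(q : n.-tuple T) pw i q * (posp i q k == j)%:R = wp k i j.
Proof.
move=> hk; rewrite (@pathA n i k (fun x => (x == j)%:R) hk) (bigD1 j) //= eqxx mulr1 big1 ?addr0 //.
by move=> x /negbTE ->; rewrite mulr0.
Qed.


Lemma expR_le12 (x : R) : 0 <= x -> x <= 2^-1 -> expR x <= 1 + 2 * x.
Proof.
move=> h0 h1.
have hF := expR_ge1Dx (- x).
have hEF : expR x * expR (- x) = 1 by rewrite -expRD subrr expR0.
have hE := expR_gt0 x.
nra.
Qed.

Variables (L M : nat).

Definition Xv (j i : T) (p : L.-tuple T) : nat := (\sum_(k < L) (posp i p k == j))%N.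
Definition Vv (j : T) (w : config T L M) : nat := (\sum_(t : token T M) Xv j t.1 (w t))%N.

Lemma Xv_le j i p : (Xv j i p <= L)%N.
Proof.
rewrite /Xv; apply: leq_trans (_ : (\sum_(k < L) 1 <= L)%N).
  by apply: leq_sum => k _; case: eqP.
by rewrite sum1_card card_ord.
Qed.

Lemma weightE (w : config T L M) : weight e R w = \prod_(t : token T M) pw t.1 (w t).
Proof. by []. Qed.

Lemma tok_factor (F : token T M -> L.-tuple T -> R) :
  \sum_(w : config T L M) \prod_t F t (w t) = \prod_t \sum_p F t p.
Proof. by rewrite bigA_distr_bigA. Qed.

Lemma Pr_marg (t : token T M) j :
  Pr e R (fun w : config T L M => pos w t L == j) = wp L t.1 j.
Proof.
rewrite /Pr big_mkcond /=.
rewrite (eq_bigr (fun w : config T L M => \prod_t' (pw t'.1 (w t') *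
   (if t' == t then (posp t.1 (w t) L == j)%:R else 1)))); last first.
  move=> w _; rewrite big_split /= -weightE.
  rewrite (bigD1 t) //= eqxx big1 ?mulr1; last by move=> t' /negbTE ->.
  by case: ifP => _; rewrite ?mulr1 ?mulr0.
rewrite (eq_bigr (fun w : config T L M => \prod_t' (pw t'.1 (w t') *
   (if t' == t then (posp t'.1 (w t') L == j)%:R else 1)))); last first.
  by move=> w _; apply: eq_bigr => t' _; case: eqP => // ->.
rewrite (tok_factor (fun t' p => pw t'.1 p * (if t' == t then (posp t'.1 p L == j)%:R else 1))) (bigD1 t) //= [X in _ * X]big1 ?mulr1; last first.
  by move=> t' /negbTE ->; under eq_bigr do rewrite mulr1; apply: pw_sum.
rewrite eqxx; exact: pw_marg.
Qed.


Lemma sum_a (j : T) :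
  \sum_(t : token T M) (\sum_(k < L) wp k t.1 j) = (M * L)%:R.
Proof.
rewrite -(pair_big predT predT (fun i (m : 'I_M) => \sum_(k < L) wp k i j)) /=.
under eq_bigr do rewrite sumr_const card_ord.
rewrite sumrMnl exchange_big /=.
under eq_bigr do rewrite wp_col.
by rewrite sumr_const card_ord natrM mulr_natl.
Qed.

Lemma my_markov (j : T) : (0 < L)%N ->
  Pr e R (fun w : config T L M => (4 * M * L < Vv j w)%N) <= expR (- M%:R).
Proof.
move=> L0.
have L0R : 0 < (L%:R : R) by rewrite ltr0n.
pose c : R := (2 * L%:R)^-1.
have c0 : 0 < c by rewrite invr_gt0 mulr_gt0.
pose Y (w : config T L M) := expR ((Vv j w)%:R * c).
apply: le_trans (_ : \sum_w weight e R w * Y w * expR (- (2 * M%:R)) <= _).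
  apply: le_trans (_ : \sum_(w | (4 * M * L < Vv j w)%N) weight e R w * Y w * expR (- (2 * M%:R)) <= _).
    apply: ler_sum => w hw.
    rewrite -mulrA; apply: ler_peMr.
      by rewrite weightE; apply: prodr_ge0 => t _; apply: pw_ge0.
    rewrite -expRD; apply: le_trans (expR_ge1Dx _); rewrite lerDl subr_ge0.
    have : ((4 * M * L)%:R : R) <= (Vv j w)%:R by rewrite ler_nat ltnW.
    rewrite !natrM => h.
    rewrite /c ler_pdivlMr ?mulr_gt0 //.
    have -> : 2 * M%:R * (2 * L%:R) = 4%:R * M%:R * (L%:R : R) by ring.
    exact: h.
  rewrite [X in _ <= X](bigID (fun w : config T L M => (4 * M * L < Vv j w)%N)) /= lerDl.
  apply: sumr_ge0 => w _.
  by rewrite mulr_ge0 ?expR_ge0 // mulr_ge0 ?expR_ge0 // weightE prodr_ge0 // => t _; apply: pw_ge0.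
rewrite -mulr_suml.
have hi (i : T) : \sum_(p : L.-tuple T) pw i p * expR ((Xv j i p)%:R * c) <=
    expR ((\sum_(k < L) wp k i j) / L%:R).
  apply: le_trans (_ : \sum_(p : L.-tuple T) pw i p * (1 + (Xv j i p)%:R / L%:R) <= _).
    apply: ler_sum => p _; apply: ler_wpM2l; first exact: pw_ge0.
    have hX : ((Xv j i p)%:R : R) <= L%:R by rewrite ler_nat Xv_le.
    have hL : (L%:R : R) != 0 by rewrite gt_eqF.
    rewrite (_ : 1 + (Xv j i p)%:R / L%:R = 1 + 2 * ((Xv j i p)%:R * c)); last first.
      by rewrite /c; field.
    apply: expR_le12; first by rewrite mulr_ge0 // ltW.
    apply: le_trans (_ : L%:R * c <= _); first by rewrite ler_wpM2r // ltW.
    by rewrite /c le_eqVlt; apply/orP; left; apply/eqP; field.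
  apply: le_trans (expR_ge1Dx _); rewrite le_eqVlt; apply/orP; left; apply/eqP.
  under eq_bigr do rewrite mulrDr mulr1.
  rewrite big_split /= pw_sum; congr (_ + _).
  under eq_bigr do rewrite mulrA. rewrite -mulr_suml; congr (_ / _).
  rewrite (eq_bigr (fun p => \sum_(k < L) pw i p * (posp i p k == j)%:R)); last first.
    move=> p _; rewrite /Xv natr_sum mulr_sumr; done.
  rewrite exchange_big /=; apply: eq_bigr => k _.
  by rewrite pw_marg // ltnW.
apply: le_trans (_ : expR (M%:R) * expR (- (2 * M%:R)) <= _); last first.
  by rewrite -expRD ler_expR; lra.
rewrite ler_pM2r ?expR_gt0 //.
have -> : \sum_w weight e R w * Y w =
    \sum_(w : config T L M) \prod_t (pw t.1 (w t) * expR ((Xv j t.1 (w t))%:R * c)).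
  apply: eq_bigr => w _; rewrite big_split /= -weightE /Y /Vv natr_sum mulr_suml.
  by rewrite expR_sum.
rewrite (tok_factor (fun t p => pw t.1 p * expR ((Xv j t.1 p)%:R * c))).
apply: le_trans (_ : \prod_(t : token T M) expR ((\sum_(k < L) wp k t.1 j) / L%:R) <= _).
  apply: ler_prod => t _; rewrite hi andbT.
  by apply: sumr_ge0 => p _; rewrite mulr_ge0 ?expR_ge0 ?pw_ge0.
rewrite -expR_sum ler_expR -mulr_suml sum_a natrM mulfK ?gt_eqF //.
Qed.

End P.


Unset Implicit Arguments. Set Strict Implicit.

Lemma total_weight (T : finType) (e : rel T) (R : realType) (eirr : irreflexive e) (L M : nat) :
  \sum_(w : config T L M) weight e R w = 1.
Proof.
under eq_bigr do rewrite weightE.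
rewrite (tok_factor (fun (t : token T M) (p : L.-tuple T) => pw e R t.1 p)).
by rewrite big1 // => t _; apply: pw_sum.
Qed.

Theorem lemma1 (R : realType) (g : nat -> R) (beta sigma : R)
  (Hg : forall l : R, 0 < l ->
     exists N0 : nat, forall N : nat, (N0 <= N)%N ->
       l * ln N%:R < g N /\ g N < l * N%:R)
  (Hbeta : 2^-1 < beta < 1) (Hsigma : 11 <= sigma)
  (c0 : R) (Hc0 : 0 < c0) :
  let h := 16 * sigma / (1 - beta) in
  exists C : R, 0 < C /\
  forall (T : finType) (e : rel T) (L M : nat),
    simple_graph e -> graph_connected e -> non_bipartite e ->
    let N := #|T| in
    ln N%:R < g N ->
    M%:R = h * g N ->
    L%:R <= c0 * ln N%:R ->
    (forall i j : T, `|walkprob e R L i j - N%:R^-1| <= (N%:R ^+ 3)^-1) ->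
    Pr e R (fun w : config T L M =>
              all_done L (iter (Num.truncn (C * ln N%:R ^+ 2))
                               (step w) (init_state T M)))
      >= 1 - (N%:R `^ (h / 3))^-1
    /\
    (forall (t : token T M) (j : T),
       `|Pr e R (fun w : config T L M => pos w t L == j) - N%:R^-1|
         <= (N%:R ^+ 3)^-1).
Proof.
move=> h.
have [hb1 hb2] : 2^-1 < beta /\ beta < 1 by apply/andP.
have hb0 : 0 < 1 - beta by lra.
have hh : 2 <= h.
  rewrite /h ler_pdivlMr //; lra.
have h0 : 0 < h by lra.
exists (5 * c0 ^+ 2 + 1); split.
  by have := sqr_ge0 c0; lra.
move=> T e L M [esym eirr] _ _ N hgN hM hL hW.
split; last first.
  by move=> t j; rewrite (Pr_marg R eirr); apply: hW.
have lnN0 : 0 <= (ln N%:R : R).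
  case: (posnP N) => [->|N0]; first by rewrite ln0.
  by apply: ln_ge0; rewrite ler1n.
have gpos : 0 < g N by apply: le_lt_trans hgN.
have M0 : (0 < M)%N by rewrite -(ltr0n R) hM mulr_gt0.
have hRHS : 0 <= (N%:R `^ (h / 3))^-1 by rewrite invr_ge0 powR_ge0.
case: (posnP L) => [L0|L0].
  subst L.
  have N1 : (N <= 1)%N.
    rewrite leqNgt; apply/negP => N2.
    have [i _] : exists i : T, i \in T by apply/card_gt0P; exact: (ltn_trans (ltn0Sn 0) N2).
    have := hW i i; rewrite /= eqxx.
    have n2 : (2 : R) <= N%:R by rewrite ler_nat.
    set u := N%:R^-1.
    have hu : u * N%:R = 1 by rewrite mulVf // gt_eqF //; lra.
    have u0 : 0 < u by rewrite invr_gt0; lra.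
    rewrite -exprVn -/u (_ : (true%:R : R) = 1) //.
    have uh : u <= 2^-1 by nra.
    have u3e : u ^+ 3 = u * (u * u) by rewrite !exprS expr0 mulr1.
    rewrite ger0_norm; last by lra.
    rewrite u3e => hh'; nra.
  have -> : ln N%:R = 0 :> R.
    have [->|->] : N = 0%N \/ N = 1%N by lia.
      by rewrite ln0.
    by rewrite ln1.
  rewrite expr0n /= mulr0 (_ : Num.truncn 0 = 0%N); last by apply/eqP; rewrite -leqn0 truncn_le_nat.
  rewrite /=.
  have -> : all_done 0 (init_state T M) by apply/forallP => t; rewrite /init_state /= ffunE.
  rewrite /Pr total_weight //; lra.
set K := Num.truncn _.
have lnpos : 0 < (ln N%:R : R).
  have : (1 : R) <= L%:R by rewrite ler1n.
  move: hL; nra.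
have hK : (L * (4 * L + 1) <= K)%N.
  rewrite /K truncn_ge_nat; last by rewrite mulr_ge0 ?exprn_ge0 //; have := sqr_ge0 c0; lra.
  have hL1 : (1 : R) <= L%:R by rewrite ler1n.
  rewrite natrM natrD natrM /=.
  have hsq : L%:R ^+ 2 <= (c0 * ln N%:R) ^+ 2 :> R.
    by rewrite ler_sqr ?nnegrE // ?mulr_ge0 // ltW.
  rewrite exprMn in hsq.
  rewrite !expr2 in hsq *.
  have := sqr_ge0 (ln N%:R : R); rewrite expr2 => hl2.
  nra.
pose bad j (w : config T L M) := (4 * M * L < Vv j w)%N.
have Egood (w : config T L M) : ~~ all_done L (iter K (step w) (init_state T M)) ->
    exists j, bad j w.
  move=> nE; apply/existsP; apply: contraNT nE => /existsPn hj.
  apply: (det_done L0 M0 _ hK) => j.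
  by have := hj j; rewrite /bad -leqNgt.
have w0 (w : config T L M) : 0 <= weight e R w.
  by rewrite weightE; apply: prodr_ge0 => t _; apply: pw_ge0.
have hbad : \sum_(w : config T L M | ~~ all_done L (iter K (step w) (init_state T M))) weight e R w
    <= \sum_j Pr e R (bad j).
  have step1 : \sum_(w : config T L M | ~~ all_done L (iter K (step w) (init_state T M))) weight e R w <=
      \sum_(w : config T L M | ~~ all_done L (iter K (step w) (init_state T M)))
          \sum_(j : T) weight e R w * (bad j w)%:R.
    apply: ler_sum => w nE; have [j bj] := Egood w nE.
    rewrite (bigD1 j) //= bj mulr1 lerDl; apply: sumr_ge0 => j' _.
    by rewrite mulr_ge0.
  apply: (le_trans step1).
  apply: le_trans (_ : \sum_(w : config T L M) \sum_(j : T) weight e R w * (bad j w)%:R <= _).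
    rewrite [X in _ <= X](bigID (fun w : config T L M => ~~ all_done L (iter K (step w) (init_state T M)))) /= lerDl.
    by apply: sumr_ge0 => w _; apply: sumr_ge0 => j _; rewrite mulr_ge0.
  rewrite exchange_big /=; apply: ler_sum => j _.
  rewrite /Pr [X in _ <= X]big_mkcond /=; apply: ler_sum => w _.
  by case: (bad j w); rewrite ?mulr1 ?mulr0.
have hsum : \sum_j Pr e R (bad j) <= N%:R * expR (- M%:R).
  apply: le_trans (_ : \sum_(j : T) expR (- M%:R) <= _).
    by apply: ler_sum => j _; apply: my_markov.
  by rewrite sumr_const mulr_natl.
have hfin : N%:R * expR (- M%:R) <= (N%:R `^ (h / 3))^-1.
  case: (posnP N) => [N0|N0].
    by rewrite N0 mul0r.
  have nN : (0 : R) < N%:R by rewrite ltr0n.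
  rewrite /powR gt_eqF // -expRN -{1}(lnK nN) -expRD ler_expR.
  have hM' : h * ln N%:R < M%:R by rewrite hM ltr_pM2l.
  nra.
have tot := @total_weight T e R eirr L M.
rewrite /Pr.
rewrite (bigID (fun w : config T L M => all_done L (iter K (step w) (init_state T M)))) /= in tot.
lra.
Qed.
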